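(* Let $n\ge 1$, $\theta^*\in\mathbb{R}^n$, and let $\phi:\mathbb{R}_{\ge0}\to\mathbb{R}^n$ be piecewise continuous and persistently exciting: there exist $M>0$, $T>0$, $\delta>0$ with $|\phi(t)|\le M$ for all $t\ge0$ and $\int_t^{t+T}\phi(s)\phi^T(s)\,ds\ge \delta I_n$ for all $t\ge 0$. Let $\beta,\gamma,\mu>0$ with $\beta\ge 2\gamma/\mu$, and set $\mathcal{N}_t:=1+\mu\,\phi^T(t)\phi(t)$. Consider the system in $x=(\theta,\vartheta)\in\mathbb{R}^n\times\mathbb{R}^n$ $$\dot\theta=-\beta(\theta-\vartheta),\qquad \dot\vartheta=-\frac{\gamma}{\mathcal{N}_t}\,\phi(t)\phi^T(t)(\theta-\theta^* ).$$ Then the point $(\theta^*,\theta^* )$ is uniformly globally asymptotically stable for this system. *)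

(* Defs.v *)
(* Vectors of R^n are represented as functions  nat -> R  whose components
   of index >= n are ignored (every definition only looks at indices < n). *)
From Stdlib Require Import Reals List.
From Coquelicot Require Import Coquelicot.
Open Scope R_scope.

Fixpoint dotn (n : nat) (u v : nat -> R) : R :=
  match n with
  | O => 0
  | S k => dotn k u v + u k * v k
  end.

Definition normn (n : nat) (v : nat -> R) : R := sqrt (dotn n v v).

Definition piecewise_continuous (n : nat) (phi : R -> nat -> R) : Prop :=
  forall a b : R, 0 <= a -> a <= b ->
  exists D : list R,
  forall i : nat, (i < n)%nat ->
  forall t : R, a <= t <= b ->
    (a < t < b -> ~ In t D -> continuous (fun s => phi s i) t) /\
    (t < b -> exists l : R, filterlim (fun s => phi s i) (at_right t) (locally l)) /\
    (a < t -> exists l : R, filterlim (fun s => phi s i) (at_left t) (locally l)).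

(* Persistency of excitation with constants M, T, delta:
   |phi(t)| <= M for all t >= 0 and
   int_t^{t+T} phi(s) phi(s)^T ds >= delta I_n for all t >= 0, the matrix
   inequality being the Loewner order, i.e. for every v in R^n
   v^T (int_t^{t+T} phi phi^T ds) v = int_t^{t+T} (phi(s)^T v)^2 ds >= delta |v|^2. *)
Definition persistently_exciting (n : nat) (phi : R -> nat -> R)
  (M T delta : R) : Prop :=
  0 < M /\ 0 < T /\ 0 < delta /\
  (forall t, 0 <= t -> normn n (phi t) <= M) /\
  (forall t, 0 <= t -> forall v : nat -> R,
     RInt (fun s => (dotn n (phi s) v) ^ 2) t (t + T) >= delta * dotn n v v).

Definition Nt (n : nat) (mu : R) (phi : R -> nat -> R) (t : R) : R :=
  1 + mu * dotn n (phi t) (phi t).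

(* x = (theta, vartheta) : [t0, +oo) -> R^n x R^n is a (Caratheodory)
   solution starting at time t0 of
     theta'    = - beta (theta - vartheta)
     vartheta' = - gamma / N_t * phi(t) phi(t)^T (theta - theta_star),
   i.e. it satisfies the integral form of the ODE on [t0, t] for all t >= t0
   (the right-hand side is only piecewise continuous in t). *)
Definition is_solution (n : nat) (beta gamma mu : R) (phi : R -> nat -> R)
  (theta_star : nat -> R) (t0 : R) (x : R -> (nat -> R) * (nat -> R)) : Prop :=
  forall t : R, t0 <= t -> forall i : nat, (i < n)%nat ->
    is_RInt (fun s => - beta * (fst (x s) i - snd (x s) i)) t0 t
            (fst (x t) i - fst (x t0) i) /\
    is_RInt (fun s => - (gamma / Nt n mu phi s) * phi s i *
                      dotn n (phi s) (fun j => fst (x s) j - theta_star j)) t0 t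
            (snd (x t) i - snd (x t0) i).

(* Uniform global asymptotic stability (Khalil, Def. 4.4) of an equilibrium,
   for a time-varying system on t >= 0 whose solutions from initial time t0
   are described by sol t0, d being the distance to the equilibrium:
   uniformly stable, uniformly globally bounded, uniformly globally attractive. *)
Definition UGAS {X : Type} (sol : R -> (R -> X) -> Prop) (d : X -> R) : Prop :=
  (forall eps, 0 < eps -> exists del, 0 < del /\
     forall t0 x, 0 <= t0 -> sol t0 x -> d (x t0) < del ->
       forall t, t0 <= t -> d (x t) < eps) /\
  (forall r, 0 < r -> exists c, 0 < c /\
     forall t0 x, 0 <= t0 -> sol t0 x -> d (x t0) < r ->
       forall t, t0 <= t -> d (x t) < c) /\
  (forall r eps, 0 < r -> 0 < eps -> exists Tt, 0 <= Tt /\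
     forall t0 x, 0 <= t0 -> sol t0 x -> d (x t0) < r ->
       forall t, t0 + Tt <= t -> d (x t) < eps).

Definition dist_eq (n : nat) (theta_star : nat -> R) (z : (nat -> R) * (nat -> R)) : R :=
  sqrt (dotn n (fun j => fst z j - theta_star j) (fun j => fst z j - theta_star j) +
        dotn n (fun j => snd z j - theta_star j) (fun j => snd z j - theta_star j)).

(* Main.v *)
Require Import Defs.
From Stdlib Require Import Reals Lra Psatz List FunctionalExtensionality Classical.
From Coquelicot Require Import Coquelicot.
Open Scope R_scope.

Lemma dotn_ext n u u' v v' :
  (forall i, (i < n)%nat -> u i = u' i) -> (forall i, (i < n)%nat -> v i = v' i) ->
  dotn n u v = dotn n u' v'.
Proof.
  induction n; intros Hu Hv; simpl; auto.
  rewrite IHn by (intros; apply Hu || apply Hv; lia).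
  rewrite (Hu n), (Hv n) by lia. reflexivity.
Qed.

Lemma dotn_comm n u v : dotn n u v = dotn n v u.
Proof. induction n; simpl; auto. rewrite IHn; ring. Qed.

Lemma dotn_scal_l n c u v : dotn n (fun i => c * u i) v = c * dotn n u v.
Proof. induction n; simpl; [ring|rewrite IHn; ring]. Qed.

Lemma dotn_scal_r n c u v : dotn n u (fun i => c * v i) = c * dotn n u v.
Proof. induction n; simpl; [ring|rewrite IHn; ring]. Qed.

Lemma dotn_plus_l n u u' v : dotn n (fun i => u i + u' i) v = dotn n u v + dotn n u' v.
Proof. induction n; simpl; [ring|rewrite IHn; ring]. Qed.

Lemma dotn_minus_l n u u' v : dotn n (fun i => u i - u' i) v = dotn n u v - dotn n u' v.
Proof. induction n; simpl; [ring|rewrite IHn; ring]. Qed.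

Lemma dotn_plus_r n u v v' : dotn n u (fun i => v i + v' i) = dotn n u v + dotn n u v'.
Proof. induction n; simpl; [ring|rewrite IHn; ring]. Qed.

Lemma dotn_minus_r n u v v' : dotn n u (fun i => v i - v' i) = dotn n u v - dotn n u v'.
Proof. induction n; simpl; [ring|rewrite IHn; ring]. Qed.

Lemma dotn_nonneg n u : 0 <= dotn n u u.
Proof. induction n; simpl; [lra|nra]. Qed.

Lemma dotn_zero n u v : dotn n u u = 0 -> dotn n u v = 0.
Proof.
  induction n; simpl; auto. intros H.
  assert (H1 := dotn_nonneg n u).
  assert (dotn n u u = 0 /\ u n = 0) as [H2 H3] by nra.
  rewrite IHn, H3 by auto. ring.
Qed.

Lemma CS n u v : (dotn n u v) ^ 2 <= dotn n u u * dotn n v v.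
Proof.
  destruct (Req_dec (dotn n v v) 0) as [H|H].
  - rewrite dotn_comm, (dotn_zero n v u H), H. nra.
  - assert (Hp := dotn_nonneg n v).
    set (l := dotn n u v / dotn n v v).
    assert (H0 := dotn_nonneg n (fun i => u i - l * v i)).
    rewrite dotn_minus_l, !dotn_minus_r, !dotn_scal_l, !dotn_scal_r in H0.
    rewrite (dotn_comm n v u) in H0.
    unfold l in H0. revert H0 Hp H.
    generalize (dotn n u u) (dotn n u v) (dotn n v v). intros uu uv vv H0 Hp H.
    assert (Hq : 0 < vv) by lra.
    idtac.
    replace (uu - uv / vv * uv - (uv / vv * uv - uv / vv * (uv / vv * vv))) with ((uu * vv - uv^2)/vv) in H0 by (field; lra).
    apply Rmult_le_compat_r with (r := vv) in H0; [|lra].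
    replace ((uu * vv - uv ^ 2) / vv * vv) with (uu*vv - uv^2) in H0 by (field; lra). lra.
Qed.


Definition cw (F : R -> R) (a b t : R) :=
  filterlim F (within (fun y => a <= y <= b) (locally t)) (locally (F t)).

Lemma cw_eps F a b t : cw F a b t -> forall eps, 0 < eps -> exists eta, 0 < eta /\
  forall y, a <= y <= b -> Rabs (y - t) < eta -> Rabs (F y - F t) < eps.
Proof.
  intros H eps He.
  assert (H1 := H (ball (F t) eps) (locally_ball (F t) (mkposreal eps He))).
  destruct H1 as [eta Heta]. exists (pos eta). split; [apply cond_pos|].
  intros y Hy Hyt. apply (Heta y); auto.
Qed.

Lemma cw_of_eps F a b t : (forall eps, 0 < eps -> exists eta, 0 < eta /\
  forall y, a <= y <= b -> Rabs (y - t) < eta -> Rabs (F y - F t) < eps) -> cw F a b t.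
Proof.
  intros H P [eps HP].
  destruct (H eps (cond_pos eps)) as [eta [He H1]].
  exists (mkposreal eta He). intros y Hy Hab. apply HP. apply H1; auto.
Qed.

Lemma cw_of_cont F a b t : continuous F t -> cw F a b t.
Proof.
  intros H. apply cw_of_eps. intros eps He.
  destruct (H (ball (F t) eps) (locally_ball (F t) (mkposreal eps He))) as [eta Heta].
  exists eta. split; [apply cond_pos|]. intros y _ Hy. apply (Heta y). exact Hy.
Qed.

Lemma cw_interior F a b t : a < t < b -> cw F a b t -> continuous F t.
Proof.
  intros Ht H P [eps HP].
  destruct (cw_eps F a b t H eps (cond_pos eps)) as [eta [He H1]].
  exists (mkposreal (Rmin eta (Rmin (t - a) (b - t))) ltac:(apply Rmin_pos; [lra|apply Rmin_pos; lra])).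
  intros y Hy. apply HP. change (Rabs (F y - F t) < eps).
  change (Rabs (y - t) < Rmin eta (Rmin (t - a) (b - t))) in Hy.
  apply H1.
  - assert (Rabs (y - t) < t - a) by (eapply Rlt_le_trans; [apply Hy|];
      eapply Rle_trans; apply Rmin_r || apply Rmin_l).
    assert (Rabs (y - t) < b - t) by (eapply Rlt_le_trans; [apply Hy|];
      eapply Rle_trans; apply Rmin_r).
    apply Rabs_def2 in H0. apply Rabs_def2 in H2. lra.
  - eapply Rlt_le_trans; [apply Hy|apply Rmin_l].
Qed.

Lemma cw_sub F a b a' b' t : a <= a' -> b' <= b -> cw F a b t -> cw F a' b' t.
Proof.
  intros H1 H2 H. apply cw_of_eps. intros eps He.
  destruct (cw_eps F a b t H eps He) as [eta [Hp H3]]. exists eta. split; auto.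
  intros y Hy. apply H3. lra.
Qed.

Lemma cw_plus F G a b t : cw F a b t -> cw G a b t -> cw (fun y => F y + G y) a b t.
Proof.
  intros HF HG. apply cw_of_eps. intros eps He.
  destruct (cw_eps F a b t HF (eps/2)) as [e1 [P1 H1]]; [lra|].
  destruct (cw_eps G a b t HG (eps/2)) as [e2 [P2 H2]]; [lra|].
  exists (Rmin e1 e2). split; [apply Rmin_pos; lra|]. intros y Hy Hyt.
  assert (A1 := H1 y Hy ltac:(eapply Rlt_le_trans; [apply Hyt|apply Rmin_l])).
  assert (A2 := H2 y Hy ltac:(eapply Rlt_le_trans; [apply Hyt|apply Rmin_r])).
  replace (F y + G y - (F t + G t)) with ((F y - F t) + (G y - G t)) by ring.
  eapply Rle_lt_trans; [apply Rabs_triang|]. lra.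
Qed.

Lemma cw_comp (g : R -> R) F a b t : continuous g (F t) -> cw F a b t -> cw (fun y => g (F y)) a b t.
Proof.
  intros Hg HF. unfold cw. eapply filterlim_comp; [apply HF|apply Hg].
Qed.

Lemma cw_mult F G a b t : cw F a b t -> cw G a b t -> cw (fun y => F y * G y) a b t.
Proof.
  intros HF HG. unfold cw.
  eapply filterlim_comp_2; [apply HF|apply HG|].
  apply (filterlim_mult (K := R_AbsRing) (F t) (G t)).
Qed.

Lemma cw_const c a b t : cw (fun _ => c) a b t.
Proof. apply cw_of_cont. apply continuous_const. Qed.

Lemma cw_opp F a b t : cw F a b t -> cw (fun y => - F y) a b t.
Proof.
  intros H. replace (fun y => - F y) with (fun y => (-1) * F y) by (apply functional_extensionality; intros; ring).
  apply cw_mult; auto. apply cw_const.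
Qed.

Lemma cw_minus F G a b t : cw F a b t -> cw G a b t -> cw (fun y => F y - G y) a b t.
Proof. intros. apply cw_plus; auto. apply cw_opp; auto. Qed.

Lemma cw_dotn n u v a b t : (forall i, (i < n)%nat -> cw (fun y => u y i) a b t) ->
  (forall i, (i < n)%nat -> cw (fun y => v y i) a b t) ->
  cw (fun y => dotn n (u y) (v y)) a b t.
Proof.
  induction n; intros Hu Hv; simpl.
  - apply cw_const.
  - apply cw_plus. apply IHn; intros; [apply Hu|apply Hv]; lia.
    apply cw_mult; [apply Hu|apply Hv]; lia.
Qed.

(* monotonicity with finitely many exceptional points *)
Lemma mono_base F a b : a <= b -> (forall t, a <= t <= b -> cw F a b t) ->
  (forall t, a < t < b -> exists l, is_derive F t l /\ l <= 0) -> F b <= F a.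
Proof.
  intros Hab Hc Hd.
  assert (Hin : forall a' b', a < a' -> a' < b' -> b' < b -> F b' <= F a').
  { intros a' b' H1 H2 H3.
    destruct (MVT_gen F a' b' (Derive F)) as [c [Hc1 Hc2]].
    - intros x Hx. rewrite Rmin_left, Rmax_right in Hx by lra.
      destruct (Hd x ltac:(lra)) as [l [Hl _]].
      rewrite (is_derive_unique _ _ _ Hl). exact Hl.
    - intros x Hx. rewrite Rmin_left, Rmax_right in Hx by lra.
      apply continuity_pt_filterlim. apply (cw_interior F a b); [lra|]. apply Hc; lra.
    - rewrite Rmin_left, Rmax_right in Hc1 by lra.
      destruct (Hd c ltac:(lra)) as [l [Hl Hl0]].
      rewrite (is_derive_unique _ _ _ Hl) in Hc2. nra. }
  destruct (Req_dec a b) as [E|E]; [subst; lra|].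
  apply Rnot_lt_le. intros Hlt.
  set (eps := (F b - F a) / 3).
  destruct (cw_eps F a b a (Hc a ltac:(lra)) eps ltac:(unfold eps; lra)) as [e1 [P1 H1]].
  destruct (cw_eps F a b b (Hc b ltac:(lra)) eps ltac:(unfold eps; lra)) as [e2 [P2 H2]].
  set (a' := a + Rmin e1 (b - a) / 3).
  set (b' := b - Rmin e2 (b - a) / 3).
  assert (0 < Rmin e1 (b - a)) by (apply Rmin_pos; lra).
  assert (0 < Rmin e2 (b - a)) by (apply Rmin_pos; lra).
  assert (Rmin e1 (b - a) <= e1) by apply Rmin_l.
  assert (Rmin e1 (b - a) <= b - a) by apply Rmin_r.
  assert (Rmin e2 (b - a) <= e2) by apply Rmin_l.
  assert (Rmin e2 (b - a) <= b - a) by apply Rmin_r.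
  assert (A1 := H1 a' ltac:(unfold a'; lra) ltac:(unfold a'; rewrite Rabs_right; lra)).
  assert (A2 := H2 b' ltac:(unfold b'; lra) ltac:(unfold b'; rewrite Rabs_left; lra)).
  assert (A3 := Hin a' b' ltac:(unfold a'; lra) ltac:(unfold a', b'; lra) ltac:(unfold b'; lra)).
  apply Rabs_def2 in A1. apply Rabs_def2 in A2. unfold eps in *. lra.
Qed.

Lemma mono F a b D : a <= b -> (forall t, a <= t <= b -> cw F a b t) ->
  (forall t, a < t < b -> ~ In t D -> exists l, is_derive F t l /\ l <= 0) -> F b <= F a.
Proof.
  revert a b. induction D as [|d D IH]; intros a b Hab Hc Hd.
  - apply mono_base; [exact Hab|exact Hc|]. intros t Ht. apply Hd; auto.
  - destruct (Rlt_dec a d) as [H1|H1]; [destruct (Rlt_dec d b) as [H2|H2]|].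
    + apply Rle_trans with (F d).
      * apply IH; [lra| |].
        intros t Ht. apply cw_sub with a b; try lra. apply Hc; lra.
        intros t Ht Hn. apply Hd; [lra|]. intros [E|E]; [lra|auto].
      * apply IH; [lra| |].
        intros t Ht. apply cw_sub with a b; try lra. apply Hc; lra.
        intros t Ht Hn. apply Hd; [lra|]. intros [E|E]; [lra|auto].
    + apply IH; auto. intros t Ht Hn. apply Hd; auto. intros [E|E]; [lra|auto].
    + apply IH; auto. intros t Ht Hn. apply Hd; auto. intros [E|E]; [lra|auto].
Qed.


Lemma flim_plus {F : (R -> Prop) -> Prop} {FF : Filter F} f g lf lg :
  filterlim f F (locally lf) -> filterlim g F (locally lg) ->
  filterlim (fun y => f y + g y) F (locally (lf + lg)).
Proof.
  intros Hf Hg. eapply filterlim_comp_2; [apply Hf|apply Hg|].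
  apply (filterlim_plus (K := R_AbsRing) lf lg).
Qed.

Lemma flim_mult {F : (R -> Prop) -> Prop} {FF : Filter F} f g lf lg :
  filterlim f F (locally lf) -> filterlim g F (locally lg) ->
  filterlim (fun y => f y * g y) F (locally (lf * lg)).
Proof.
  intros Hf Hg. eapply filterlim_comp_2; [apply Hf|apply Hg|].
  apply (filterlim_mult (K := R_AbsRing) lf lg).
Qed.

Lemma flim_const {F : (R -> Prop) -> Prop} {FF : Filter F} c :
  filterlim (fun _ : R => c) F (locally (c : R)).
Proof. apply filterlim_const. Qed.

Lemma flim_dotn {F : (R -> Prop) -> Prop} {FF : Filter F} n u v L :
  (forall i, (i < n)%nat -> filterlim (fun s => u s i) F (locally (L i))) ->
  filterlim (fun s => dotn n (u s) v) F (locally (dotn n L v)).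
Proof.
  induction n; intros H; simpl.
  - apply flim_const.
  - apply flim_plus. apply IHn; intros; apply H; lia.
    apply flim_mult. apply H; lia. apply flim_const.
Qed.

Lemma choice_fin n (P : nat -> R -> Prop) :
  (forall i, (i < n)%nat -> exists l, P i l) -> exists L : nat -> R, forall i, (i < n)%nat -> P i (L i).
Proof.
  induction n; intros H.
  - exists (fun _ => 0). intros; lia.
  - destruct IHn as [L HL]. intros; apply H; lia.
    destruct (H n ltac:(lia)) as [l Hl].
    exists (fun i => if Nat.eq_dec i n then l else L i).
    intros i Hi. destruct (Nat.eq_dec i n). subst; auto. apply HL; lia.
Qed.

Lemma lim_right_eps h t l : filterlim h (at_right t) (locally l) ->
  forall eps, 0 < eps -> exists eta, 0 < eta /\ forall y, t < y < t + eta -> Rabs (h y - l) < eps.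
Proof.
  intros H eps He.
  destruct (H (ball l eps) (locally_ball l (mkposreal eps He))) as [eta Heta].
  exists (pos eta). split; [apply cond_pos|]. intros y Hy. apply (Heta y); [|lra].
  change (Rabs (y - t) < eta). rewrite Rabs_right; lra.
Qed.

Lemma lim_left_eps h t l : filterlim h (at_left t) (locally l) ->
  forall eps, 0 < eps -> exists eta, 0 < eta /\ forall y, t - eta < y < t -> Rabs (h y - l) < eps.
Proof.
  intros H eps He.
  destruct (H (ball l eps) (locally_ball l (mkposreal eps He))) as [eta Heta].
  exists (pos eta). split; [apply cond_pos|]. intros y Hy. apply (Heta y); [|lra].
  change (Rabs (y - t) < eta). rewrite Rabs_left; lra.
Qed.

Lemma cont_of_eps g z : (forall eps, 0 < eps -> exists eta, 0 < eta /\
  forall y, Rabs (y - z) < eta -> Rabs (g y - g z) < eps) -> continuous g z.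
Proof.
  intros H P [eps HP].
  destruct (H eps (cond_pos eps)) as [eta [He H1]].
  exists (mkposreal eta He). intros y Hy. apply HP. apply H1. exact Hy.
Qed.

Definition PCprop (h : R -> R) (a b : R) (D : list R) :=
  forall t, a <= t <= b ->
    (a < t < b -> ~ In t D -> continuous h t) /\
    (t < b -> exists l, filterlim h (at_right t) (locally l)) /\
    (a < t -> exists l, filterlim h (at_left t) (locally l)).

Lemma pc_int_base h a b : a < b -> PCprop h a b nil -> ex_RInt h a b.
Proof.
  intros Hab H.
  destruct (H a ltac:(lra)) as [_ [[la Ha] _]]. lra.
  destruct (H b ltac:(lra)) as [_ [_ [lb Hb]]]. lra.
  set (g := (fun y => if Rle_dec y a then (la : R) else if Rle_dec b y then (lb : R) else h y) : R -> R).
  apply (ex_RInt_ext (V := R_NormedModule) g).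
  { intros x Hx. rewrite Rmin_left, Rmax_right in Hx by lra. unfold g.
    destruct (Rle_dec x a); [lra|]. destruct (Rle_dec b x); [lra|auto]. }
  apply (ex_RInt_continuous (V := R_CompleteNormedModule)). intros z Hz. rewrite Rmin_left, Rmax_right in Hz by lra.
  destruct (Req_dec z a) as [Ea|Ea]; [|destruct (Req_dec z b) as [Eb|Eb]].
  - subst z. apply cont_of_eps. intros eps He.
    destruct (lim_right_eps h a la Ha eps He) as [eta [Pe He2]].
    exists (Rmin eta (b - a)). split; [apply Rmin_pos; lra|]. intros y Hy.
    assert (Rmin eta (b-a) <= eta) by apply Rmin_l. assert (Rmin eta (b-a) <= b - a) by apply Rmin_r.
    apply Rabs_def2 in Hy.
    unfold g. destruct (Rle_dec a a); [|lra]. destruct (Rle_dec y a).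
    + rewrite Rminus_diag, Rabs_R0; lra.
    + destruct (Rle_dec b y); [lra|]. apply He2; lra.
  - subst z. apply cont_of_eps. intros eps He.
    destruct (lim_left_eps h b lb Hb eps He) as [eta [Pe He2]].
    exists (Rmin eta (b - a)). split; [apply Rmin_pos; lra|]. intros y Hy.
    assert (Rmin eta (b-a) <= eta) by apply Rmin_l. assert (Rmin eta (b-a) <= b - a) by apply Rmin_r.
    apply Rabs_def2 in Hy.
    unfold g. destruct (Rle_dec b a); [lra|]. destruct (Rle_dec b b); [|lra].
    destruct (Rle_dec y a); [lra|]. destruct (Rle_dec b y).
    + rewrite Rminus_diag, Rabs_R0; lra.
    + apply He2; lra.
  - apply continuous_ext_loc with h.
    + exists (mkposreal (Rmin (z - a) (b - z)) ltac:(apply Rmin_pos; lra)).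
      intros y Hy. change (Rabs (y - z) < Rmin (z - a) (b - z)) in Hy.
      assert (Rmin (z-a) (b-z) <= z - a) by apply Rmin_l. assert (Rmin (z-a) (b-z) <= b - z) by apply Rmin_r.
      apply Rabs_def2 in Hy. unfold g.
      destruct (Rle_dec y a); [lra|]. destruct (Rle_dec b y); [lra|auto].
    + destruct (H z ltac:(lra)) as [Hc _]. apply Hc; [lra|auto].
Qed.

Lemma pc_int h a b D : a <= b -> PCprop h a b D -> ex_RInt h a b.
Proof.
  revert a b. induction D as [|d D IH]; intros a b Hab H.
  - destruct (Req_dec a b). subst. apply ex_RInt_point. apply pc_int_base; [lra|auto].
  - destruct (Rlt_dec a d) as [H1|H1]; [destruct (Rlt_dec d b) as [H2|H2]|].
    + apply ex_RInt_Chasles_0 with d; [lra| |].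
      * apply IH; [lra|]. intros t Ht. destruct (H t ltac:(lra)) as [A [B C]].
        repeat split; auto; [|intros; apply B; lra].
        intros Ht' Hn. apply A; [lra|]. intros [E|E]; [lra|auto].
      * apply IH; [lra|]. intros t Ht. destruct (H t ltac:(lra)) as [A [B C]].
        repeat split; auto; [|intros; apply C; lra].
        intros Ht' Hn. apply A; [lra|]. intros [E|E]; [lra|auto].
    + apply IH; auto. intros t Ht. destruct (H t Ht) as [A [B C]].
      repeat split; auto. intros Ht' Hn. apply A; auto. intros [E|E]; [lra|auto].
    + apply IH; auto. intros t Ht. destruct (H t Ht) as [A [B C]].
      repeat split; auto. intros Ht' Hn. apply A; auto. intros [E|E]; [lra|auto].
Qed.


Lemma der_plus (f g : R -> R) x df dg : is_derive f x df -> is_derive g x dg ->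
  is_derive (fun y => f y + g y) x (df + dg).
Proof. intros. apply (is_derive_plus f g x df dg); auto. Qed.

Lemma der_mult (f g : R -> R) x df dg : is_derive f x df -> is_derive g x dg ->
  is_derive (fun y => f y * g y) x (df * g x + f x * dg).
Proof. intros. apply (is_derive_mult f g x df dg); auto. intros; apply Rmult_comm. Qed.

Lemma der_const (c : R) x : is_derive (fun _ => c) x 0.
Proof. apply (is_derive_const c x). Qed.

Lemma der_id x : is_derive (fun y : R => y) x 1.
Proof. apply (is_derive_id x). Qed.

Lemma der_ext (f g : R -> R) x l : (forall y, f y = g y) -> is_derive f x l -> is_derive g x l.
Proof. intros. apply (is_derive_ext f g x l); auto. Qed.

Lemma der_eq (f : R -> R) x l l' : l = l' -> is_derive f x l -> is_derive f x l'.
Proof. intros; subst; auto. Qed.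

Lemma der_dotn n (du dv : nat -> R) (U V : R -> nat -> R) t :
  (forall i, (i < n)%nat -> is_derive (fun s => U s i) t (du i)) ->
  (forall i, (i < n)%nat -> is_derive (fun s => V s i) t (dv i)) ->
  is_derive (fun s => dotn n (U s) (V s)) t (dotn n du (V t) + dotn n (U t) dv).
Proof.
  induction n; intros HU HV; simpl.
  - eapply der_eq; [|apply der_const]. symmetry; apply Rplus_0_r.
  - eapply der_eq; [|apply der_plus; [apply IHn; intros; [apply HU|apply HV]; lia|
      apply der_mult; [apply HU|apply HV]; lia]].
    simpl; ring.
Qed.

Lemma dotn_sq_plus n u v : dotn n (fun i => u i + v i) (fun i => u i + v i) <= 2 * dotn n u u + 2 * dotn n v v.
Proof. induction n; simpl; [lra|]. pose proof (Rle_0_sqr (u n - v n)); unfold Rsqr in *; nra. Qed.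

Lemma dotn_sq_minus n u v : dotn n (fun i => u i - v i) (fun i => u i - v i) <= 2 * dotn n u u + 2 * dotn n v v.
Proof. induction n; simpl; [lra|]. pose proof (Rle_0_sqr (u n + v n)); unfold Rsqr in *; nra. Qed.

(* Regularity of solutions *)
Lemma sol_lip n beta gamma mu phi ts t0 x :
  is_solution n beta gamma mu phi ts t0 x -> forall i, (i < n)%nat -> forall Rr, t0 <= Rr ->
  exists B, forall y z, t0 <= y <= Rr -> t0 <= z <= Rr ->
    Rabs (fst (x y) i - fst (x z) i) <= B * Rabs (y - z) /\
    Rabs (snd (x y) i - snd (x z) i) <= B * Rabs (y - z).
Proof.
  intros Hs i Hi Rr HR.
  destruct (Hs Rr HR i Hi) as [H1 H2].
  destruct (ex_RInt_ub _ t0 Rr (ex_intro _ _ H1)) as [B1 HB1].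
  destruct (ex_RInt_ub _ t0 Rr (ex_intro _ _ H2)) as [B2 HB2].
  exists (Rmax B1 B2). intros y z Hy Hz.
  destruct (Hs y ltac:(lra) i Hi) as [Fy Gy].
  destruct (Hs z ltac:(lra) i Hi) as [Fz Gz].
  assert (Hmin : t0 <= Rmin z y) by (apply Rmin_glb; lra).
  assert (Hmax : Rmax z y <= Rr) by (apply Rmax_lub; lra).
  assert (Hab : Rmin t0 Rr = t0 /\ Rmax t0 Rr = Rr) by (rewrite Rmin_left, Rmax_right; lra).
  split.
  - assert (I := is_RInt_Chasles _ z t0 y _ _ (is_RInt_swap _ _ _ _ Fz) Fy).
    pose proof (fun H => norm_RInt_le_const_abs _ z y _ B1 H I) as K.
    lapply K; [clear K; intro K|intros w Hw; apply HB1; destruct Hab as [-> ->]; destruct Hw;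
      split; [apply Rle_trans with (Rmin z y)|apply Rle_trans with (Rmax z y)]; assumption].
    change (Rabs (plus (opp (fst (x z) i - fst (x t0) i)) (fst (x y) i - fst (x t0) i)) <= Rabs (y - z) * B1) in K.
    unfold plus, opp in K; simpl in K.
    replace (- (fst (x z) i - fst (x t0) i) + (fst (x y) i - fst (x t0) i)) with (fst (x y) i - fst (x z) i) in K by ring.
    assert (B1 <= Rmax B1 B2) by apply Rmax_l.
    assert (0 <= Rabs (y - z)) by apply Rabs_pos. nra.
  - assert (I := is_RInt_Chasles _ z t0 y _ _ (is_RInt_swap _ _ _ _ Gz) Gy).
    pose proof (fun H => norm_RInt_le_const_abs _ z y _ B2 H I) as K.
    lapply K; [clear K; intro K|intros w Hw; apply HB2; destruct Hab as [-> ->]; destruct Hw;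
      split; [apply Rle_trans with (Rmin z y)|apply Rle_trans with (Rmax z y)]; assumption].
    change (Rabs (plus (opp (snd (x z) i - snd (x t0) i)) (snd (x y) i - snd (x t0) i)) <= Rabs (y - z) * B2) in K.
    unfold plus, opp in K; simpl in K.
    replace (- (snd (x z) i - snd (x t0) i) + (snd (x y) i - snd (x t0) i)) with (snd (x y) i - snd (x z) i) in K by ring.
    assert (B2 <= Rmax B1 B2) by apply Rmax_r.
    assert (0 <= Rabs (y - z)) by apply Rabs_pos. nra.
Qed.

Lemma sol_cw n beta gamma mu phi ts t0 x :
  is_solution n beta gamma mu phi ts t0 x -> forall i, (i < n)%nat -> forall a b t,
  t0 <= a -> a <= t <= b ->
  cw (fun s => fst (x s) i) a b t /\ cw (fun s => snd (x s) i) a b t.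
Proof.
  intros Hs i Hi a b t Ha Ht.
  destruct (sol_lip n beta gamma mu phi ts t0 x Hs i Hi b ltac:(lra)) as [B HB].
  split; apply cw_of_eps; intros eps He; exists (eps / (Rabs B + 1));
    (split; [apply Rdiv_lt_0_compat; [lra|pose proof (Rabs_pos B); lra]|]);
    intros y Hy Hyt; destruct (HB y t ltac:(lra) ltac:(lra)) as [H1 H2].
  - apply Rle_lt_trans with (B * Rabs (y - t)); auto.
    pose proof (Rabs_pos B). pose proof (Rle_abs B). pose proof (Rabs_pos (y - t)).
    apply Rmult_lt_compat_r with (r := Rabs B + 1) in Hyt; [|lra].
    unfold Rdiv in Hyt. rewrite Rmult_assoc, Rinv_l, Rmult_1_r in Hyt by lra. nra.
  - apply Rle_lt_trans with (B * Rabs (y - t)); auto.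
    pose proof (Rabs_pos B). pose proof (Rle_abs B). pose proof (Rabs_pos (y - t)).
    apply Rmult_lt_compat_r with (r := Rabs B + 1) in Hyt; [|lra].
    unfold Rdiv in Hyt. rewrite Rmult_assoc, Rinv_l, Rmult_1_r in Hyt by lra. nra.
Qed.

Lemma Nt_pos n mu phi s : 0 < mu -> 1 <= Nt n mu phi s.
Proof. intros. unfold Nt. pose proof (dotn_nonneg n (phi s)). nra. Qed.

Lemma cw_Nt n mu phi a b t : (forall j, (j < n)%nat -> cw (fun s => phi s j) a b t) ->
  cw (fun s => Nt n mu phi s) a b t.
Proof.
  intros H. unfold Nt. apply cw_plus; [apply cw_const|]. apply cw_mult; [apply cw_const|].
  apply cw_dotn; auto.
Qed.

Lemma cw_g n gamma mu phi ts (x : R -> (nat -> R) * (nat -> R)) a b t i : 0 < mu ->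
  (forall j, (j < n)%nat -> cw (fun s => phi s j) a b t) ->
  (forall j, (j < n)%nat -> cw (fun s => fst (x s) j) a b t) -> (i < n)%nat ->
  cw (fun s => - (gamma / Nt n mu phi s) * phi s i *
                      dotn n (phi s) (fun j => fst (x s) j - ts j)) a b t.
Proof.
  intros Hmu Hp Hx Hi.
  apply cw_mult; [apply cw_mult|].
  - apply cw_opp. unfold Rdiv. apply cw_mult; [apply cw_const|].
    apply (cw_comp Rinv (fun s => Nt n mu phi s)).
    + apply continuous_Rinv. pose proof (Nt_pos n mu phi t Hmu). lra.
    + apply cw_Nt; auto.
  - apply Hp; auto.
  - apply (cw_dotn n phi (fun s j => fst (x s) j - ts j)); auto.
    intros j Hj. apply cw_minus; [apply Hx; auto|apply cw_const].
Qed.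

Lemma sol_deriv n beta gamma mu phi ts t0 x tau :
  is_solution n beta gamma mu phi ts t0 x -> 0 < mu -> t0 < tau ->
  (forall j, (j < n)%nat -> continuous (fun s => phi s j) tau) ->
  forall i, (i < n)%nat ->
  is_derive (fun s => fst (x s) i) tau (- beta * (fst (x tau) i - snd (x tau) i)) /\
  is_derive (fun s => snd (x s) i) tau
     (- (gamma / Nt n mu phi tau) * phi tau i * dotn n (phi tau) (fun j => fst (x tau) j - ts j)).
Proof.
  intros Hs Hmu Ht Hp i Hi.
  assert (Hcx : forall j, (j < n)%nat -> cw (fun s => fst (x s) j) t0 (tau + 1) tau /\
                                         cw (fun s => snd (x s) j) t0 (tau + 1) tau).
  { intros j Hj. apply (sol_cw n beta gamma mu phi ts t0 x Hs j Hj); lra. }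
  assert (Hloc : locally tau (fun y => t0 < y)).
  { exists (mkposreal (tau - t0) ltac:(lra)). intros y Hy.
    change (Rabs (y - tau) < tau - t0) in Hy. apply Rabs_def2 in Hy. lra. }
  split.
  - set (f := fun s => - beta * (fst (x s) i - snd (x s) i)).
    assert (D := is_derive_RInt f (fun y => fst (x y) i - fst (x t0) i) t0 tau).
    lapply D; [clear D; intro D|].
    2:{ apply (filter_imp (fun y => t0 < y)); auto. intros y Hy. apply (proj1 (Hs y ltac:(lra) i Hi)). }
    lapply D; [clear D; intro D|].
    2:{ apply (cw_interior f t0 (tau + 1)); [lra|]. unfold f.
        apply cw_mult; [apply cw_const|]. apply cw_minus; apply Hcx; auto. }
    eapply der_ext with (fun y => (fst (x y) i - fst (x t0) i) + fst (x t0) i).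
    intros; ring.
    eapply der_eq; [|apply der_plus; [apply D|apply der_const]]. unfold f; simpl; ring.
  - set (f := fun s => - (gamma / Nt n mu phi s) * phi s i *
                      dotn n (phi s) (fun j => fst (x s) j - ts j)).
    assert (D := is_derive_RInt f (fun y => snd (x y) i - snd (x t0) i) t0 tau).
    lapply D; [clear D; intro D|].
    2:{ apply (filter_imp (fun y => t0 < y)); auto. intros y Hy. apply (proj2 (Hs y ltac:(lra) i Hi)). }
    lapply D; [clear D; intro D|].
    2:{ apply (cw_interior f t0 (tau + 1)); [lra|]. unfold f.
        apply cw_g; auto. intros j Hj; apply cw_of_cont; auto. intros j Hj; apply Hcx; auto. }
    eapply der_ext with (fun y => (snd (x y) i - snd (x t0) i) + snd (x t0) i).
    intros; ring.
    eapply der_eq; [|apply der_plus; [apply D|apply der_const]]. unfold f; simpl; ring.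
Qed.


Definition th (x : R -> (nat -> R) * (nat -> R)) (ts : nat -> R) s := fun i => fst (x s) i - ts i.
Definition vt (x : R -> (nat -> R) * (nat -> R)) (ts : nat -> R) s := fun i => snd (x s) i - ts i.
Definition ee (x : R -> (nat -> R) * (nat -> R)) s := fun i => fst (x s) i - snd (x s) i.
Definition UU n x ts s := dotn n (vt x ts s) (vt x ts s) + dotn n (ee x s) (ee x s).
Definition aa n phi x ts s := dotn n (phi s) (th x ts s).
Definition bb n phi x s := dotn n (phi s) (ee x s).
Definition EE n x s := dotn n (ee x s) (ee x s).
Definition Ud n beta gamma mu phi x ts s :=
  -2 * (gamma / Nt n mu phi s) * (aa n phi x ts s) ^ 2
  + 4 * (gamma / Nt n mu phi s) * aa n phi x ts s * bb n phi x s
  - 2 * beta * EE n x s.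

Lemma key_ineq g m be P E a b : 0 < g -> 0 < m -> be >= 2 * g / m -> 0 <= P -> 0 <= E ->
  b ^ 2 <= P * E ->
  -2 * (g / (1 + m * P)) * a ^ 2 + 4 * (g / (1 + m * P)) * a * b - 2 * be * E
  <= - (g / (1 + m * P)) * a ^ 2 - (4 * g / (m * (1 + m * P))) * E.
Proof.
  intros Hg Hm Hb HP HE Hab.
  assert (HN : 0 < 1 + m * P) by nra.
  set (N := 1 + m * P) in *.
  set (c := g / N).
  assert (Hc : 0 < c) by (unfold c; apply Rdiv_lt_0_compat; lra).
  assert (H1 : -2 * c * a ^ 2 + 4 * c * a * b <= - c * a ^ 2 + 4 * c * (P * E)).
  { assert (0 <= c * (a - 2 * b) ^ 2) by (apply Rmult_le_pos; [lra|apply pow2_ge_0]).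
    assert (0 <= c * (P * E - b ^ 2)) by (apply Rmult_le_pos; lra).
    replace (-2 * c * a ^ 2 + 4 * c * a * b) with (- c * a ^ 2 - c * (a - 2 * b) ^ 2 + 4 * c * b ^ 2) by ring.
    lra. }
  assert (H2 : 4 * c * P + 4 * g / (m * N) = 4 * g / m).
  { unfold c, N. field. unfold N in HN. split; lra. }
  assert (H3 : 2 * g / m <= be) by lra.
  assert (H4 : 4 * c * (P * E) - 2 * be * E <= - (4 * g / (m * N)) * E).
  { assert ((4 * c * P + 4 * g / (m * N) - 2 * be) * E <= 0).
    { apply Rmult_le_0_r; [|lra]. rewrite H2.
      replace (4 * g / m) with (2 * (2 * g / m)) by (field; lra). lra. }
    nra. }
  fold c. lra.
Qed.

Lemma U_deriv n beta gamma mu phi ts t0 x tau :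
  is_solution n beta gamma mu phi ts t0 x -> 0 < mu -> t0 < tau ->
  (forall j, (j < n)%nat -> continuous (fun s => phi s j) tau) ->
  is_derive (UU n x ts) tau (Ud n beta gamma mu phi x ts tau).
Proof.
  intros Hs Hmu Ht Hp.
  assert (HD := sol_deriv n beta gamma mu phi ts t0 x tau Hs Hmu Ht Hp).
  set (c := gamma / Nt n mu phi tau).
  set (a := aa n phi x ts tau).
  set (dv := fun i => (- c * a) * phi tau i).
  set (de := fun i => - beta * ee x tau i - dv i).
  assert (Dv : forall i, (i < n)%nat -> is_derive (fun s => vt x ts s i) tau (dv i)).
  { intros i Hi. unfold vt. eapply der_eq; [|apply der_plus; [apply (proj2 (HD i Hi))|apply (der_const (- ts i))]].
    unfold dv, c, a, aa, th. simpl. ring. }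
  assert (De : forall i, (i < n)%nat -> is_derive (fun s => ee x s i) tau (de i)).
  { intros i Hi. unfold ee. eapply der_eq; [|apply der_plus; [apply (proj1 (HD i Hi))|
       apply (is_derive_opp _ _ _ (proj2 (HD i Hi)))]].
    unfold de, dv, c, a, aa, th, ee. simpl. unfold opp; simpl. ring. }
  unfold UU. eapply der_eq; [|apply der_plus; [apply (der_dotn n dv dv (vt x ts) (vt x ts)); apply Dv|
     apply (der_dotn n de de (ee x) (ee x)); apply De]].
  assert (E1 : dotn n dv (vt x ts tau) = - c * a * dotn n (phi tau) (vt x ts tau)).
  { unfold dv. apply dotn_scal_l. }
  assert (E2 : dotn n (phi tau) (vt x ts tau) = a - bb n phi x tau).
  { unfold a, aa, bb. rewrite <- dotn_minus_r. apply dotn_ext; auto.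
    intros; unfold vt, th, ee; ring. }
  assert (E3 : dotn n de (ee x tau) = - beta * EE n x tau - (- c * a) * bb n phi x tau).
  { unfold de. rewrite dotn_minus_l, dotn_scal_l. unfold dv. rewrite dotn_scal_l. reflexivity. }
  rewrite (dotn_comm n (vt x ts tau) dv), (dotn_comm n (ee x tau) de), E1, E3, E2.
  unfold Ud. fold c. fold a. simpl. ring.
Qed.

Lemma Ud_bound n beta gamma mu phi x ts s : 0 < gamma -> 0 < mu -> beta >= 2 * gamma / mu ->
  Ud n beta gamma mu phi x ts s <=
  - (gamma / Nt n mu phi s) * (aa n phi x ts s) ^ 2 - (4 * gamma / (mu * Nt n mu phi s)) * EE n x s.
Proof.
  intros Hg Hm Hb. unfold Ud, Nt.
  apply key_ineq; auto. apply dotn_nonneg. apply dotn_nonneg. apply CS.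
Qed.

Lemma Ud_nonpos n beta gamma mu phi x ts s : 0 < gamma -> 0 < mu -> beta >= 2 * gamma / mu ->
  Ud n beta gamma mu phi x ts s <= 0.
Proof.
  intros Hg Hm Hb. eapply Rle_trans; [apply Ud_bound; auto|].
  pose proof (Nt_pos n mu phi s Hm). pose proof (dotn_nonneg n (ee x s)).
  assert (0 <= gamma / Nt n mu phi s) by (apply Rlt_le, Rdiv_lt_0_compat; lra).
  assert (0 <= 4 * gamma / (mu * Nt n mu phi s)) by (apply Rlt_le, Rdiv_lt_0_compat; nra).
  pose proof (pow2_ge_0 (aa n phi x ts s)). unfold EE. nra.
Qed.


Lemma good_pts n phi a b : piecewise_continuous n phi -> 0 <= a -> a <= b ->
  exists D, forall tau, a < tau < b -> ~ In tau D -> forall j, (j < n)%nat -> continuous (fun s => phi s j) tau.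
Proof.
  intros Hpc Ha Hab. destruct (Hpc a b Ha Hab) as [D HD]. exists D.
  intros tau Ht Hn j Hj. destruct (HD j Hj tau ltac:(lra)) as [H _]. apply H; auto.
Qed.

Lemma compare n phi t0 F a b : piecewise_continuous n phi -> 0 <= t0 -> t0 <= a -> a <= b ->
  (forall tau, a <= tau <= b -> cw F a b tau) ->
  (forall tau, a < tau < b -> t0 < tau -> (forall j, (j < n)%nat -> continuous (fun s => phi s j) tau) ->
     exists l, is_derive F tau l /\ l <= 0) -> F b <= F a.
Proof.
  intros Hpc H0 Ha Hab Hc Hd.
  destruct (good_pts n phi a b Hpc ltac:(lra) Hab) as [D HD].
  apply (mono F a b D Hab Hc). intros tau Ht Hn. apply Hd; auto. lra.
Qed.

Lemma U_cw n beta gamma mu phi ts t0 x a b t : is_solution n beta gamma mu phi ts t0 x ->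
  t0 <= a -> a <= t <= b -> cw (UU n x ts) a b t.
Proof.
  intros Hs Ha Ht. unfold UU.
  assert (H := sol_cw n beta gamma mu phi ts t0 x Hs).
  apply cw_plus; apply cw_dotn; intros i Hi; unfold vt, ee;
    try apply cw_minus; try apply cw_const; try apply (H i Hi a b t Ha Ht).
Qed.

Lemma U_mono n beta gamma mu phi ts t0 x s t : piecewise_continuous n phi ->
  is_solution n beta gamma mu phi ts t0 x -> 0 <= t0 -> 0 < gamma -> 0 < mu -> beta >= 2 * gamma / mu ->
  t0 <= s -> s <= t -> UU n x ts t <= UU n x ts s.
Proof.
  intros Hpc Hs H0 Hg Hm Hb Hst Hst'.
  apply (compare n phi t0 (UU n x ts) s t Hpc H0 Hst Hst').
  - intros tau Ht. apply (U_cw n beta gamma mu phi ts t0 x); auto.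
  - intros tau Ht Ht0 Hp. exists (Ud n beta gamma mu phi x ts tau). split.
    apply (U_deriv n beta gamma mu phi ts t0 x tau); auto.
    apply Ud_nonpos; auto.
Qed.


Definition SH n ts phi M T delta beta gamma mu t0 x :=
  piecewise_continuous n phi /\ persistently_exciting n phi M T delta /\ 0 < beta /\ 0 < gamma /\
  0 < mu /\ beta >= 2 * gamma / mu /\ 0 <= t0 /\ is_solution n beta gamma mu phi ts t0 x.

Lemma phi_bound n phi M T delta tau : persistently_exciting n phi M T delta -> 0 <= tau ->
  dotn n (phi tau) (phi tau) <= M ^ 2.
Proof.
  intros [HM [HT [Hd [Hb _]]]] Ht. specialize (Hb tau Ht). unfold normn in Hb.
  pose proof (dotn_nonneg n (phi tau)).
  rewrite <- (sqrt_sqrt (dotn n (phi tau) (phi tau))) by auto.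
  pose proof (sqrt_pos (dotn n (phi tau) (phi tau))). nra.
Qed.

Lemma ineq_z ex Z y P M T c g a U' : 0 < ex <= 1 -> 0 <= Z -> y ^ 2 <= P * Z -> 0 <= P <= M ^ 2 ->
  0 < M -> 0 < T -> 0 < c <= g -> U' <= - c * a ^ 2 ->
  ex * (- (1 / T) * Z - 2 * c * a * y) + g * M ^ 2 * T * U' <= 0.
Proof.
  intros Hex HZ Hy HP HM HT Hc HU.
  assert (HMT : 0 < M ^ 2 * T) by (apply Rmult_lt_0_compat; [apply pow_lt|]; lra).
  assert (H1 : - 2 * c * a * y * (M ^ 2 * T) <= y ^ 2 + (M ^ 2 * T) ^ 2 * c ^ 2 * a ^ 2).
  { pose proof (pow2_ge_0 (y + M ^ 2 * T * c * a)). nra. }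
  assert (H2 : y ^ 2 <= M ^ 2 * Z).
  { apply Rle_trans with (P * Z); auto. apply Rmult_le_compat_r; lra. }
  assert (H3 : - 2 * c * a * y <= Z / T + M ^ 2 * T * c ^ 2 * a ^ 2).
  { apply Rmult_le_reg_r with (M ^ 2 * T); auto.
    replace ((Z / T + M ^ 2 * T * c ^ 2 * a ^ 2) * (M ^ 2 * T)) with (M ^ 2 * Z + (M ^ 2 * T) ^ 2 * c ^ 2 * a ^ 2)
      by (field; lra). lra. }
  assert (H4 : - (1 / T) * Z - 2 * c * a * y <= M ^ 2 * T * c ^ 2 * a ^ 2).
  { replace (- (1 / T) * Z) with (- (Z / T)) by (field; lra). lra. }
  assert (H5 : 0 <= M ^ 2 * T * c ^ 2 * a ^ 2).
  { apply Rmult_le_pos; [apply Rmult_le_pos|apply pow2_ge_0]; [lra|apply pow2_ge_0]. }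
  assert (H6 : ex * (- (1 / T) * Z - 2 * c * a * y) <= M ^ 2 * T * c ^ 2 * a ^ 2).
  { destruct (Rle_dec 0 (- (1 / T) * Z - 2 * c * a * y)).
    - apply Rle_trans with (1 * (- (1 / T) * Z - 2 * c * a * y)); [|lra].
      apply Rmult_le_compat_r; lra.
    - assert (ex * (- (1 / T) * Z - 2 * c * a * y) <= 0) by nra. lra. }
  assert (H7 : M ^ 2 * T * c ^ 2 * a ^ 2 <= g * M ^ 2 * T * (c * a ^ 2)).
  { replace (M ^ 2 * T * c ^ 2 * a ^ 2) with (M ^ 2 * T * (c * a ^ 2) * c) by ring.
    replace (g * M ^ 2 * T * (c * a ^ 2)) with (M ^ 2 * T * (c * a ^ 2) * g) by ring.
    apply Rmult_le_compat_l; [|lra]. apply Rmult_le_pos; [lra|]. apply Rmult_le_pos; [lra|apply pow2_ge_0]. }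
  assert (H8 : g * M ^ 2 * T * U' <= g * M ^ 2 * T * (- c * a ^ 2)).
  { apply Rmult_le_compat_l; [|lra]. apply Rmult_le_pos; [|lra]. apply Rmult_le_pos; [lra|apply pow2_ge_0]. }
  lra.
Qed.

Lemma vt_deriv n beta gamma mu phi ts t0 x tau :
  is_solution n beta gamma mu phi ts t0 x -> 0 < mu -> t0 < tau ->
  (forall j, (j < n)%nat -> continuous (fun s => phi s j) tau) ->
  forall i, (i < n)%nat -> is_derive (fun s => vt x ts s i) tau
     ((- (gamma / Nt n mu phi tau) * aa n phi x ts tau) * phi tau i).
Proof.
  intros Hs Hmu Ht Hp i Hi.
  assert (HD := sol_deriv n beta gamma mu phi ts t0 x tau Hs Hmu Ht Hp i Hi).
  unfold vt. eapply der_eq; [|apply der_plus; [apply (proj2 HD)|apply (der_const (- ts i))]].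
  unfold aa, th. simpl. ring.
Qed.

Lemma dotn_zero_l n v : dotn n (fun _ => 0) v = 0.
Proof. induction n; simpl; [|rewrite IHn]; ring. Qed.

Lemma exp_lin_cw s T a b t : cw (fun tau => exp (- (tau - s) / T)) a b t.
Proof.
  apply (cw_comp exp (fun tau => - (tau - s) / T)). apply continuous_exp.
  apply cw_of_cont. apply (ex_derive_continuous (K:=R_AbsRing) (V:=R_NormedModule)). auto_derive. auto.
Qed.

Lemma zf_cw n beta gamma mu phi ts t0 x s a b t : is_solution n beta gamma mu phi ts t0 x ->
  t0 <= a -> a <= t <= b ->
  cw (fun tau => dotn n (fun i => vt x ts tau i - vt x ts s i) (fun i => vt x ts tau i - vt x ts s i)) a b t.
Proof.
  intros Hs Ha Ht. assert (H := sol_cw n beta gamma mu phi ts t0 x Hs).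
  apply (cw_dotn n (fun tau i => vt x ts tau i - vt x ts s i) (fun tau i => vt x ts tau i - vt x ts s i));
  intros i Hi; unfold vt; apply cw_minus; try apply cw_const; apply cw_minus; try apply cw_const;
  apply (H i Hi a b t Ha Ht).
Qed.

Lemma z_bound n ts phi M T delta beta gamma mu t0 x s t1 :
  SH n ts phi M T delta beta gamma mu t0 x -> t0 <= s -> s <= t1 <= s + T ->
  dotn n (fun i => vt x ts t1 i - vt x ts s i) (fun i => vt x ts t1 i - vt x ts s i)
  <= 3 * gamma * M ^ 2 * T * (UU n x ts s - UU n x ts t1).
Proof.
  intros [Hpc [HPE [Hbe [Hg [Hm [Hb [H0 Hs]]]]]]] Hst Ht1.
  assert (HPE' := HPE). destruct HPE' as [HM [HT _]].
  set (zf := fun tau i => vt x ts tau i - vt x ts s i).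
  set (F := fun tau => exp (- (tau - s) / T) * dotn n (zf tau) (zf tau) + gamma * M ^ 2 * T * UU n x ts tau).
  assert (HF : F t1 <= F s).
  { apply (compare n phi t0 F s t1 Hpc H0 Hst ltac:(lra)).
    - intros tau Htau. unfold F. apply cw_plus; [apply cw_mult|apply cw_mult].
      apply exp_lin_cw. apply (zf_cw n beta gamma mu phi ts t0 x); auto; lra.
      apply cw_const. apply (U_cw n beta gamma mu phi ts t0 x); auto; lra.
    - intros tau Htau Ht0 Hp.
      set (c := gamma / Nt n mu phi tau). set (a := aa n phi x ts tau).
      set (dv := fun i => (- c * a) * phi tau i).
      assert (Dz : forall i, (i < n)%nat -> is_derive (fun t => zf t i) tau (dv i)).
      { intros i Hi. unfold zf. eapply der_eq; [|apply der_plus;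
          [apply (vt_deriv n beta gamma mu phi ts t0 x tau Hs Hm Ht0 Hp i Hi)|apply (der_const (- vt x ts s i))]].
        unfold dv, c, a. simpl. ring. }
      set (ex := exp (- (tau - s) / T)).
      set (Z := dotn n (zf tau) (zf tau)).
      set (y := dotn n (phi tau) (zf tau)).
      exists (ex * (- (1 / T) * Z - 2 * c * a * y) + gamma * M ^ 2 * T * Ud n beta gamma mu phi x ts tau).
      split.
      + assert (D1 : is_derive (fun t => exp (- (t - s) / T)) tau (ex * (- 1 / T))).
        { unfold ex. auto_derive; auto. unfold Rminus, Rdiv. ring. }
        assert (D2 := der_dotn n dv dv zf zf tau Dz Dz).
        assert (D3 := U_deriv n beta gamma mu phi ts t0 x tau Hs Hm Ht0 Hp).
        unfold F. eapply der_eq; [|apply der_plus; [apply (der_mult _ _ _ _ _ D1 D2)|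
           apply (der_mult _ _ _ _ _ (der_const (gamma * M ^ 2 * T) tau) D3)]].
        match goal with |- @eq _ ?l ?r => change (@eq R l r) end.
        fold ex Z.
        unfold dv. rewrite dotn_scal_l, dotn_scal_r, (dotn_comm n (zf tau) (phi tau)). fold y.
        unfold Rdiv. ring.
      + apply (ineq_z ex Z y (dotn n (phi tau) (phi tau)) M T c gamma a).
        * unfold ex. split; [apply exp_pos|]. rewrite <- exp_0. destruct (Req_dec tau s); [subst; lra|].
          left. apply exp_increasing. apply Ropp_lt_cancel. rewrite Ropp_0.
          replace (- (- (tau - s) / T)) with ((tau - s) / T) by (field; lra).
          apply Rdiv_lt_0_compat; lra.
        * apply dotn_nonneg.
        * unfold y, Z. rewrite (dotn_comm n (phi tau)). rewrite Rmult_comm. apply CS.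
        * split; [apply dotn_nonneg|apply (phi_bound n phi M T delta); auto; lra].
        * auto.
        * auto.
        * pose proof (Nt_pos n mu phi tau Hm). unfold c. split; [apply Rdiv_lt_0_compat; lra|].
          unfold Rdiv. rewrite <- (Rmult_1_r gamma) at 2. apply Rmult_le_compat_l; [lra|].
          rewrite <- Rinv_1. apply Rinv_le_contravar; lra.
        * eapply Rle_trans; [apply Ud_bound; auto|]. fold c a.
          pose proof (Nt_pos n mu phi tau Hm). pose proof (dotn_nonneg n (ee x tau)). unfold EE.
          assert (0 <= 4 * gamma / (mu * Nt n mu phi tau)) by (apply Rlt_le, Rdiv_lt_0_compat; nra).
          nra. }
  unfold F in HF.
  replace (dotn n (zf s) (zf s)) with 0 in HF.
  2:{ symmetry. rewrite <- (dotn_zero_l n (zf s)). apply dotn_ext; auto. intros; unfold zf; ring. }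
  replace (- (s - s) / T) with 0 in HF by (field; lra). rewrite exp_0 in HF.
  assert (Hex : / 3 <= exp (- (t1 - s) / T)).
  { apply Rle_trans with (exp (-1)).
    - replace (exp (-1)) with (/ exp 1) by (rewrite <- exp_Ropp; f_equal; lra). apply Rinv_le_contravar; [apply exp_pos|apply exp_le_3].
    - destruct (Req_dec (- (t1 - s) / T) (-1)) as [E|E]; [rewrite E; lra|].
      left. apply exp_increasing. apply Rmult_lt_reg_r with T; [lra|].
      replace (- (t1 - s) / T * T) with (- (t1 - s)) by (field; lra).
      assert (- (t1 - s) / T * T <> -1 * T) by (intro; apply E; apply Rmult_eq_reg_r with T; lra).
      replace (- (t1 - s) / T * T) with (- (t1 - s)) in H by (field; lra). lra. }
  assert (HZ := dotn_nonneg n (zf t1)).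
  fold zf.
  assert (dotn n (zf t1) (zf t1) * / 3 <= exp (- (t1 - s) / T) * dotn n (zf t1) (zf t1)) by nra.
  change (dotn n (zf t1) (zf t1) <= 3 * gamma * M ^ 2 * T * (UU n x ts s - UU n x ts t1)).
  lra.
Qed.


Lemma sq_cont (z : R) : continuous (fun w : R => w ^ 2) z.
Proof. apply (ex_derive_continuous (K:=R_AbsRing) (V:=R_NormedModule)). auto_derive. auto. Qed.

Lemma h_PC n phi v a b : piecewise_continuous n phi -> 0 <= a -> a <= b ->
  exists D, PCprop (fun y => (dotn n (phi y) v) ^ 2) a b D /\
  forall tau, a < tau < b -> ~ In tau D -> forall j, (j < n)%nat -> continuous (fun s => phi s j) tau.
Proof.
  intros Hpc Ha Hab. destruct (Hpc a b Ha Hab) as [D HD]. exists D. split.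
  - intros t Ht. repeat split.
    + intros Ht' Hn. apply (cw_interior _ (t - 1) (t + 1)); [lra|].
      apply (cw_comp (fun w => w ^ 2) (fun y => dotn n (phi y) v)). apply sq_cont.
      apply cw_dotn; intros j Hj; [|apply cw_const]. apply cw_of_cont.
      destruct (HD j Hj t Ht) as [H _]. apply H; auto.
    + intros Htb. destruct (choice_fin n (fun j l => filterlim (fun s => phi s j) (at_right t) (locally l)))
        as [L HL]. { intros j Hj. destruct (HD j Hj t Ht) as [_ [H _]]. apply H; auto. }
      exists ((dotn n L v) ^ 2).
      apply (filterlim_comp _ _ _ (fun y => dotn n (phi y) v) (fun w => w ^ 2) (at_right t) (locally (dotn n L v)));
        [apply flim_dotn; apply HL|apply sq_cont].
    + intros Hat. destruct (choice_fin n (fun j l => filterlim (fun s => phi s j) (at_left t) (locally l)))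
        as [L HL]. { intros j Hj. destruct (HD j Hj t Ht) as [_ [_ H]]. apply H; auto. }
      exists ((dotn n L v) ^ 2).
      apply (filterlim_comp _ _ _ (fun y => dotn n (phi y) v) (fun w => w ^ 2) (at_left t) (locally (dotn n L v)));
        [apply flim_dotn; apply HL|apply sq_cont].
  - intros tau Ht Hn j Hj. destruct (HD j Hj tau ltac:(lra)) as [H _]. apply H; auto.
Qed.

Lemma RInt_cw (h : R -> R) a b t : a <= b -> ex_RInt h a b -> a <= t <= b -> cw (fun tau => RInt h a tau) a b t.
Proof.
  intros Hab Hi Ht.
  destruct (ex_RInt_ub h a b Hi) as [B HB].
  rewrite Rmin_left, Rmax_right in HB by lra.
  assert (Hsub : forall y, a <= y <= b -> ex_RInt h a y).
  { intros y Hy. apply (ex_RInt_Chasles_1 h a y b); auto. }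
  apply cw_of_eps. intros eps He. exists (eps / (Rabs B + 1)).
  split; [apply Rdiv_lt_0_compat; [lra|pose proof (Rabs_pos B); lra]|].
  intros y Hy Hyt.
  assert (Hty : ex_RInt h t y).
  { apply (ex_RInt_Chasles h t a y); [apply ex_RInt_swap; apply Hsub; lra|apply Hsub; lra]. }
  rewrite <- (RInt_Chasles h a t y (Hsub t Ht) Hty).
  change (Rabs (plus (RInt h a t) (RInt h t y) - RInt h a t) < eps).
  unfold plus; simpl. unfold Rminus. rewrite Rplus_comm, <- Rplus_assoc, Rplus_opp_l, Rplus_0_l.
  assert (K := norm_RInt_le_const_abs h t y (RInt h t y) B).
  lapply K; [clear K; intro K|].
  2:{ intros w Hw. apply HB. split.
      apply Rle_trans with (Rmin t y); [apply Rmin_glb; lra|tauto].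
      apply Rle_trans with (Rmax t y); [tauto|apply Rmax_lub; lra]. }
  specialize (K (RInt_correct h t y Hty)).
  change (Rabs (RInt h t y) <= Rabs (y - t) * B) in K.
  eapply Rle_lt_trans; [apply K|].
  pose proof (Rabs_pos B). pose proof (Rle_abs B). pose proof (Rabs_pos (y - t)).
  apply Rmult_lt_compat_r with (r := Rabs B + 1) in Hyt; [|lra].
  unfold Rdiv in Hyt. rewrite Rmult_assoc, Rinv_l, Rmult_1_r in Hyt by lra. nra.
Qed.

Lemma RInt_deriv (h : R -> R) a b tau : a < tau < b -> ex_RInt h a b -> continuous h tau ->
  is_derive (fun y => RInt h a y) tau (h tau).
Proof.
  intros Ht Hi Hc. apply (is_derive_RInt h (fun y => RInt h a y) a tau); auto.
  exists (mkposreal (Rmin (tau - a) (b - tau)) ltac:(apply Rmin_pos; lra)).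
  intros y Hy. change (Rabs (y - tau) < Rmin (tau - a) (b - tau)) in Hy.
  assert (Rmin (tau-a) (b-tau) <= tau - a) by apply Rmin_l.
  assert (Rmin (tau-a) (b-tau) <= b - tau) by apply Rmin_r.
  apply Rabs_def2 in Hy.
  apply (RInt_correct (V := R_CompleteNormedModule)). apply (ex_RInt_Chasles_1 h a y b); auto. lra.
Qed.

Lemma ineq_h g m M T Dl P E Zz a b y U' : 0 < g -> 0 < m -> 0 < M -> 0 < T -> 0 <= Dl ->
  0 <= P <= M ^ 2 -> 0 <= E -> 0 <= Zz -> y ^ 2 <= P * Zz -> b ^ 2 <= P * E ->
  Zz <= 3 * g * M ^ 2 * T * Dl ->
  U' <= - (g / (1 + m * P)) * a ^ 2 - (4 * g / (m * (1 + m * P))) * E ->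
  (a - b - y) ^ 2 + 3 * (1 + m * M ^ 2) ^ 2 / g * U' - 9 * g * M ^ 4 * T * Dl <= 0.
Proof.
  intros Hg Hm HM HT HD HP HE HZ Hy Hb HZb HU.
  set (K := 1 + m * M ^ 2). set (N := 1 + m * P).
  assert (HN1 : 1 <= N) by (unfold N; nra).
  assert (HNK : N <= K) by (unfold N, K; nra).
  assert (H1 : (a - b - y) ^ 2 <= 3 * a ^ 2 + 3 * b ^ 2 + 3 * y ^ 2).
  { pose proof (pow2_ge_0 (a + b)). pose proof (pow2_ge_0 (a + y)). pose proof (pow2_ge_0 (b - y)). nra. }
  assert (H2 : b ^ 2 <= M ^ 2 * E) by (apply Rle_trans with (P * E); auto; apply Rmult_le_compat_r; lra).
  assert (H3 : y ^ 2 <= M ^ 2 * Zz) by (apply Rle_trans with (P * Zz); auto; apply Rmult_le_compat_r; lra).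
  assert (HM2 : 0 < M ^ 2) by (apply pow_lt; lra).
  assert (H4 : M ^ 2 * Zz <= 3 * g * M ^ 4 * T * Dl).
  { replace (3 * g * M ^ 4 * T * Dl) with (M ^ 2 * (3 * g * M ^ 2 * T * Dl)) by ring.
    apply Rmult_le_compat_l; lra. }
  assert (HK : 0 < K) by lra.
  assert (H5 : 3 * K ^ 2 / g * U' <= - (3 * K ^ 2 / N) * a ^ 2 - (12 * K ^ 2 / (m * N)) * E).
  { assert (0 <= 3 * K ^ 2 / g) by (apply Rlt_le, Rdiv_lt_0_compat; [nra|lra]).
    apply Rle_trans with (3 * K ^ 2 / g * (- (g / N) * a ^ 2 - (4 * g / (m * N)) * E)).
    apply Rmult_le_compat_l; auto.
    right. field. split; [lra|]. split; lra. }
  assert (H6 : 3 * a ^ 2 <= 3 * K ^ 2 / N * a ^ 2).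
  { apply Rmult_le_compat_r; [apply pow2_ge_0|].
    apply Rmult_le_reg_r with N; [lra|]. replace (3 * K ^ 2 / N * N) with (3 * K ^ 2) by (field; lra). nra. }
  assert (H7 : 3 * M ^ 2 * E <= 12 * K ^ 2 / (m * N) * E).
  { apply Rmult_le_compat_r; auto.
    apply Rmult_le_reg_r with (m * N); [nra|]. replace (12 * K ^ 2 / (m * N) * (m * N)) with (12 * K ^ 2) by (field; lra).
    assert (m * M ^ 2 <= K) by (unfold K; lra).
    assert (K <= K * K) by nra. assert (K * N <= K * K) by nra. nra. }
  lra.
Qed.

Lemma lin_cw c s a b t : cw (fun tau => c * (tau - s)) a b t.
Proof. apply cw_mult; [apply cw_const|]. apply cw_minus; [|apply cw_const]. apply cw_of_cont. apply continuous_id. Qed.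

Lemma lin_der c s tau : is_derive (fun t => c * (t - s)) tau c.
Proof. auto_derive; auto. ring. Qed.

Definition KK mu M := 1 + mu * M ^ 2.
Definition C3 mu M T gamma := 3 * (KK mu M) ^ 2 / gamma + 9 * gamma * M ^ 4 * T ^ 2.

Lemma window_v n ts phi M T delta beta gamma mu t0 x s :
  SH n ts phi M T delta beta gamma mu t0 x -> t0 <= s ->
  delta * dotn n (vt x ts s) (vt x ts s) <= C3 mu M T gamma * (UU n x ts s - UU n x ts (s + T)).
Proof.
  intros HSH Hst. assert (HSH' := HSH).
  destruct HSH' as [Hpc [HPE [Hbe [Hg [Hm [Hb [H0 Hs]]]]]]].
  assert (HPE' := HPE). destruct HPE' as [HM [HT [Hd [_ HPEi]]]].
  set (v := vt x ts s).
  set (Dl := UU n x ts s - UU n x ts (s + T)).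
  assert (HDl : 0 <= Dl) by (unfold Dl; pose proof (U_mono n beta gamma mu phi ts t0 x s (s + T) Hpc Hs H0 Hg Hm Hb Hst ltac:(lra)); lra).
  set (h := fun y => (dotn n (phi y) v) ^ 2).
  destruct (h_PC n phi v s (s + T) Hpc ltac:(lra) ltac:(lra)) as [D [HPC Hgood]].
  assert (Hi : ex_RInt h s (s + T)) by (apply (pc_int h s (s + T) D); [lra|exact HPC]).
  set (C1 := 3 * (KK mu M) ^ 2 / gamma).
  set (C2 := 9 * gamma * M ^ 4 * T * Dl).
  set (G := fun tau => RInt h s tau + (C1 * UU n x ts tau - C2 * (tau - s))).
  assert (HG : G (s + T) <= G s).
  { apply (mono G s (s + T) D); [lra| |].
    - intros tau Ht. unfold G. apply cw_plus. apply RInt_cw; auto; lra.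
      apply cw_minus. apply cw_mult; [apply cw_const|]. apply (U_cw n beta gamma mu phi ts t0 x); auto; lra.
      apply lin_cw.
    - intros tau Ht Hn. assert (Hp := Hgood tau Ht Hn).
      assert (Ht0 : t0 < tau) by lra.
      exists (h tau + (C1 * Ud n beta gamma mu phi x ts tau - C2)). split.
      + unfold G. apply der_plus. apply (RInt_deriv h s (s + T)); auto.
        apply (cw_interior _ (tau - 1) (tau + 1)); [lra|]. unfold h.
        apply (cw_comp (fun w => w ^ 2) (fun y => dotn n (phi y) v)). apply sq_cont.
        apply cw_dotn; intros j Hj; [|apply cw_const]. apply cw_of_cont. auto.
        eapply der_eq; [|apply der_plus; [apply (der_mult _ _ _ _ _ (der_const C1 tau)
           (U_deriv n beta gamma mu phi ts t0 x tau Hs Hm Ht0 Hp))|apply (is_derive_opp _ _ _ (lin_der C2 s tau))]].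
        unfold opp; simpl. ring.
      + set (zf := fun i => vt x ts tau i - vt x ts s i).
        assert (Hz := z_bound n ts phi M T delta beta gamma mu t0 x s tau HSH Hst ltac:(lra)).
        fold zf in Hz.
        assert (HUt := U_mono n beta gamma mu phi ts t0 x tau (s + T) Hpc Hs H0 Hg Hm Hb ltac:(lra) ltac:(lra)).
        assert (Hhv : dotn n (phi tau) v = aa n phi x ts tau - bb n phi x tau - dotn n (phi tau) zf).
        { unfold aa, bb. rewrite <- !dotn_minus_r. apply dotn_ext; auto. intros i Hi'.
          unfold v, zf, th, ee, vt. ring. }
        unfold h. rewrite Hhv. unfold C1, C2, KK. 
        enough (HH : (aa n phi x ts tau - bb n phi x tau - dotn n (phi tau) zf) ^ 2 +
          3 * (1 + mu * M ^ 2) ^ 2 / gamma * Ud n beta gamma mu phi x ts tau - (9 * gamma * M ^ 4 * T * Dl) <= 0) by lra.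
        apply (ineq_h gamma mu M T Dl (dotn n (phi tau) (phi tau)) (EE n x tau) (dotn n zf zf)); auto.
        * split; [apply dotn_nonneg|apply (phi_bound n phi M T delta); auto; lra].
        * apply dotn_nonneg.
        * apply dotn_nonneg.
        * apply CS.
        * apply CS.
        * assert (0 <= 3 * gamma * M ^ 2 * T) by (apply Rmult_le_pos; [|lra]; apply Rmult_le_pos; [lra|apply pow2_ge_0]).
          unfold Dl. eapply Rle_trans; [apply Hz|]. apply Rmult_le_compat_l; auto. lra.
        * apply Ud_bound; auto. }
  unfold G in HG. rewrite RInt_point in HG.
  assert (HPEs := HPEi s ltac:(lra) v). fold h in HPEs.
  unfold C3. fold C1. unfold C2 in HG. unfold Dl in *.
  change (zero : R) with 0 in HG.
  replace (s - s) with 0 in HG by ring.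
  assert (Hx : 9 * gamma * M ^ 4 * T * (UU n x ts s - UU n x ts (s + T)) * (s + T - s) =
     9 * gamma * M ^ 4 * T ^ 2 * (UU n x ts s - UU n x ts (s + T))) by ring.
  lra.
Qed.


Definition Cp mu M T delta gamma := 2 * C3 mu M T gamma / delta + 6 * gamma * M ^ 2 * T.
Definition c4 mu M gamma := mu * KK mu M / (4 * gamma).

Lemma KK_ge1 mu M : 0 < mu -> 1 <= KK mu M.
Proof. intros. unfold KK. pose proof (pow2_ge_0 M). nra. Qed.

Lemma C3_pos mu M T gamma : 0 < gamma -> 0 < mu -> 0 <= C3 mu M T gamma.
Proof.
  intros Hg Hm. unfold C3. pose proof (KK_ge1 mu M Hm).
  apply Rplus_le_le_0_compat.
  apply Rlt_le, Rdiv_lt_0_compat; [|lra]. nra.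
  assert (0 <= M ^ 4) by (replace (M ^ 4) with ((M ^ 2) ^ 2) by ring; apply pow2_ge_0).
  pose proof (pow2_ge_0 T). apply Rmult_le_pos; auto. apply Rmult_le_pos; auto. lra.
Qed.

Lemma window n ts phi M T delta beta gamma mu t0 x s :
  SH n ts phi M T delta beta gamma mu t0 x -> t0 <= s ->
  T * UU n x ts (s + T) <= (Cp mu M T delta gamma * T + c4 mu M gamma) * (UU n x ts s - UU n x ts (s + T)).
Proof.
  intros HSH Hst. assert (HSH' := HSH).
  destruct HSH' as [Hpc [HPE [Hbe [Hg [Hm [Hb [H0 Hs]]]]]]].
  assert (HPE' := HPE). destruct HPE' as [HM [HT [Hd [_ HPEi]]]].
  set (v := vt x ts s).
  set (Dl := UU n x ts s - UU n x ts (s + T)).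
  assert (HDl : 0 <= Dl) by (unfold Dl; pose proof (U_mono n beta gamma mu phi ts t0 x s (s + T) Hpc Hs H0 Hg Hm Hb Hst ltac:(lra)); lra).
  assert (Hv := window_v n ts phi M T delta beta gamma mu t0 x s HSH Hst). fold v Dl in Hv.
  set (CC := Cp mu M T delta gamma).
  set (c := c4 mu M gamma).
  set (Q := fun tau => (tau - s) * UU n x ts tau + (c * UU n x ts tau - (CC * Dl) * (tau - s))).
  assert (HQ : Q (s + T) <= Q s).
  { apply (compare n phi t0 Q s (s + T) Hpc H0 Hst ltac:(lra)).
    - intros tau Ht. unfold Q. apply cw_plus. apply cw_mult.
      apply cw_minus; [apply cw_of_cont; apply continuous_id|apply cw_const].
      apply (U_cw n beta gamma mu phi ts t0 x); auto; lra.
      apply cw_minus; [apply cw_mult; [apply cw_const|apply (U_cw n beta gamma mu phi ts t0 x); auto; lra]|apply lin_cw].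
    - intros tau Ht Ht0 Hp.
      set (Ud' := Ud n beta gamma mu phi x ts tau).
      exists (UU n x ts tau + (tau - s) * Ud' + (c * Ud' - CC * Dl)). split.
      + assert (D1 : is_derive (fun t => t - s) tau 1) by (auto_derive; auto).
        assert (D2 := U_deriv n beta gamma mu phi ts t0 x tau Hs Hm Ht0 Hp).
        unfold Q. eapply der_eq; [|apply der_plus; [apply (der_mult _ _ _ _ _ D1 D2)|
          apply der_plus; [apply (der_mult _ _ _ _ _ (der_const c tau) D2)|
          apply (is_derive_opp _ _ _ (lin_der (CC * Dl) s tau))]]].
        unfold opp; simpl. fold Ud'. ring.
      + set (zf := fun i => vt x ts tau i - vt x ts s i).
        assert (Hz := z_bound n ts phi M T delta beta gamma mu t0 x s tau HSH Hst ltac:(lra)).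
        fold zf in Hz.
        assert (HUt := U_mono n beta gamma mu phi ts t0 x tau (s + T) Hpc Hs H0 Hg Hm Hb ltac:(lra) ltac:(lra)).
        assert (Hvt : dotn n (vt x ts tau) (vt x ts tau) <= 2 * dotn n v v + 2 * dotn n zf zf).
        { eapply Rle_trans; [|apply (dotn_sq_plus n v zf)]. right. apply dotn_ext; auto;
          intros; unfold zf, v; ring. }
        assert (HU0 : Ud' <= 0) by (apply Ud_nonpos; auto).
        assert (HUb := Ud_bound n beta gamma mu phi x ts tau Hg Hm Hb). fold Ud' in HUb.
        pose proof (Nt_pos n mu phi tau Hm) as HN.
        assert (HNK : Nt n mu phi tau <= KK mu M).
        { unfold Nt, KK. pose proof (phi_bound n phi M T delta tau HPE ltac:(lra)). nra. }
        pose proof (KK_ge1 mu M Hm) as HK.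
        assert (HE := dotn_nonneg n (ee x tau)).
        assert (Hc : c * Ud' <= - EE n x tau).
        { assert (0 <= c) by (unfold c, c4; apply Rlt_le, Rdiv_lt_0_compat; nra).
          apply Rle_trans with (c * (- (gamma / Nt n mu phi tau) * (aa n phi x ts tau) ^ 2
              - (4 * gamma / (mu * Nt n mu phi tau)) * EE n x tau)).
          apply Rmult_le_compat_l; auto.
          assert (0 <= c * (gamma / Nt n mu phi tau) * (aa n phi x ts tau) ^ 2).
          { apply Rmult_le_pos; [apply Rmult_le_pos; auto|apply pow2_ge_0]. apply Rlt_le, Rdiv_lt_0_compat; lra. }
          assert (c * (4 * gamma / (mu * Nt n mu phi tau)) = KK mu M / Nt n mu phi tau).
          { unfold c, c4. field. split; lra. }
          assert (1 <= KK mu M / Nt n mu phi tau).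
          { apply Rmult_le_reg_r with (Nt n mu phi tau); [lra|]. unfold Rdiv. rewrite Rmult_assoc, Rinv_l; lra. }
          unfold EE in *. nra. }
        assert (Htv : (tau - s) * Ud' <= 0) by (apply Rmult_le_0_l; lra).
        assert (Hv' : dotn n v v <= C3 mu M T gamma / delta * Dl).
        { apply Rmult_le_reg_l with delta; auto. unfold Rdiv. replace (delta * (C3 mu M T gamma * / delta * Dl)) with
            (C3 mu M T gamma * Dl) by (field; lra). lra. }
        assert (Hz' : dotn n zf zf <= 3 * gamma * M ^ 2 * T * Dl).
        { eapply Rle_trans; [apply Hz|]. apply Rmult_le_compat_l; [|unfold Dl; lra].
          apply Rmult_le_pos; [|lra]. apply Rmult_le_pos; [lra|apply pow2_ge_0]. }
        unfold UU. unfold CC, Cp. unfold EE in Hc.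
        assert (2 * C3 mu M T gamma / delta * Dl = 2 * (C3 mu M T gamma / delta * Dl)) by (field; lra).
        nra. }
  unfold Q in HQ. replace (s - s) with 0 in HQ by ring.
  replace (s + T - s) with T in HQ by ring. unfold Dl in *. nra.
Qed.

Definition Cq mu M T delta gamma := Cp mu M T delta gamma + c4 mu M gamma / T.
Definition qq mu M T delta gamma := Cq mu M T delta gamma / (1 + Cq mu M T delta gamma).

Lemma Cq_pos mu M T delta gamma : 0 < gamma -> 0 < mu -> 0 < T -> 0 < delta -> 0 <= Cq mu M T delta gamma.
Proof.
  intros Hg Hm HT Hd. unfold Cq, Cp, c4. pose proof (C3_pos mu M T gamma Hg Hm). pose proof (KK_ge1 mu M Hm).
  pose proof (pow2_ge_0 M).
  assert (0 <= 2 * C3 mu M T gamma / delta) by (apply Rmult_le_pos; [lra|apply Rlt_le, Rinv_0_lt_compat; lra]).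
  assert (0 <= 6 * gamma * M ^ 2 * T) by (apply Rmult_le_pos; [|lra]; apply Rmult_le_pos; nra).
  assert (0 <= mu * KK mu M / (4 * gamma) / T).
  { apply Rlt_le. apply Rdiv_lt_0_compat; auto. apply Rdiv_lt_0_compat; nra. }
  lra.
Qed.

Lemma contract n ts phi M T delta beta gamma mu t0 x s :
  SH n ts phi M T delta beta gamma mu t0 x -> t0 <= s ->
  UU n x ts (s + T) <= qq mu M T delta gamma * UU n x ts s.
Proof.
  intros HSH Hst. assert (HSH' := HSH).
  destruct HSH' as [Hpc [HPE [Hbe [Hg [Hm [Hb [H0 Hs]]]]]]].
  assert (HPE' := HPE). destruct HPE' as [HM [HT [Hd _]]].
  assert (W := window n ts phi M T delta beta gamma mu t0 x s HSH Hst).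
  pose proof (Cq_pos mu M T delta gamma Hg Hm HT Hd) as HC.
  assert (W' : UU n x ts (s + T) <= Cq mu M T delta gamma * (UU n x ts s - UU n x ts (s + T))).
  { apply Rmult_le_reg_l with T; auto. unfold Cq.
    replace (T * ((Cp mu M T delta gamma + c4 mu M gamma / T) * (UU n x ts s - UU n x ts (s + T))))
      with ((Cp mu M T delta gamma * T + c4 mu M gamma) * (UU n x ts s - UU n x ts (s + T))) by (field; lra).
    auto. }
  unfold qq. apply Rmult_le_reg_l with (1 + Cq mu M T delta gamma); [lra|].
  replace ((1 + Cq mu M T delta gamma) * (Cq mu M T delta gamma / (1 + Cq mu M T delta gamma) * UU n x ts s))
    with (Cq mu M T delta gamma * UU n x ts s) by (field; lra).
  nra.
Qed.

Lemma iterate n ts phi M T delta beta gamma mu t0 x :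
  SH n ts phi M T delta beta gamma mu t0 x -> forall k,
  UU n x ts (t0 + INR k * T) <= (qq mu M T delta gamma) ^ k * UU n x ts t0.
Proof.
  intros HSH. assert (HSH' := HSH).
  destruct HSH' as [Hpc [HPE [Hbe [Hg [Hm [Hb [H0 Hs]]]]]]].
  assert (HPE' := HPE). destruct HPE' as [HM [HT [Hd _]]].
  pose proof (Cq_pos mu M T delta gamma Hg Hm HT Hd) as HC.
  assert (Hq : 0 <= qq mu M T delta gamma) by (unfold qq; apply Rmult_le_pos; [lra|apply Rlt_le, Rinv_0_lt_compat; lra]).
  induction k.
  - simpl. replace (t0 + 0 * T) with t0 by ring. lra.
  - rewrite S_INR. replace (t0 + (INR k + 1) * T) with ((t0 + INR k * T) + T) by ring.
    eapply Rle_trans; [apply (contract n ts phi M T delta beta gamma mu t0 x); auto|].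
    pose proof (pos_INR k). nra.
    simpl. rewrite Rmult_assoc. apply Rmult_le_compat_l; auto.
Qed.

Lemma S_le_U n x ts t :
  dotn n (th x ts t) (th x ts t) + dotn n (vt x ts t) (vt x ts t) <= 3 * UU n x ts t.
Proof.
  unfold UU. assert (H := dotn_sq_plus n (vt x ts t) (ee x t)).
  replace (dotn n (fun i => vt x ts t i + ee x t i) (fun i => vt x ts t i + ee x t i)) with
    (dotn n (th x ts t) (th x ts t)) in H by (apply dotn_ext; intros; unfold th, vt, ee; ring).
  pose proof (dotn_nonneg n (vt x ts t)). pose proof (dotn_nonneg n (ee x t)). lra.
Qed.

Lemma U_le_S n x ts t :
  UU n x ts t <= 3 * (dotn n (th x ts t) (th x ts t) + dotn n (vt x ts t) (vt x ts t)).
Proof.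
  unfold UU. assert (H := dotn_sq_minus n (th x ts t) (vt x ts t)).
  replace (dotn n (fun i => th x ts t i - vt x ts t i) (fun i => th x ts t i - vt x ts t i)) with
    (dotn n (ee x t) (ee x t)) in H by (apply dotn_ext; intros; unfold th, vt, ee; ring).
  pose proof (dotn_nonneg n (vt x ts t)). pose proof (dotn_nonneg n (th x ts t)). lra.
Qed.

Lemma dist_S n ts (x : R -> (nat -> R) * (nat -> R)) t :
  dist_eq n ts (x t) = sqrt (dotn n (th x ts t) (th x ts t) + dotn n (vt x ts t) (vt x ts t)).
Proof. reflexivity. Qed.

Lemma S_nonneg n x ts t : 0 <= dotn n (th x ts t) (th x ts t) + dotn n (vt x ts t) (vt x ts t).
Proof. pose proof (dotn_nonneg n (th x ts t)). pose proof (dotn_nonneg n (vt x ts t)). lra. Qed.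

Lemma sqrt_lt_sq S r : 0 <= S -> 0 < r -> sqrt S < r -> S < r ^ 2.
Proof.
  intros HS Hr H. rewrite <- (sqrt_sqrt S HS). pose proof (sqrt_pos S). nra.
Qed.

Lemma sq_lt_sqrt S r : 0 <= S -> 0 < r -> S < r ^ 2 -> sqrt S < r.
Proof.
  intros HS Hr H. apply Rnot_le_lt. intros Hc. rewrite <- (sqrt_sqrt S HS) in H.
  pose proof (sqrt_pos S). nra.
Qed.

Theorem theorem2 (n : nat) (theta_star : nat -> R) (phi : R -> nat -> R)
  (M T delta beta gamma mu : R) :
  (1 <= n)%nat ->
  piecewise_continuous n phi ->
  persistently_exciting n phi M T delta ->
  0 < beta -> 0 < gamma -> 0 < mu ->
  beta >= 2 * gamma / mu ->
  UGAS (is_solution n beta gamma mu phi theta_star) (dist_eq n theta_star).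
Proof.
  intros Hn Hpc HPE Hbe Hg Hm Hb.
  assert (HPE' := HPE). destruct HPE' as [HM [HT [Hd _]]].
  assert (Hbound : forall t0 x, 0 <= t0 -> is_solution n beta gamma mu phi theta_star t0 x ->
     forall t, t0 <= t ->
     dotn n (th x theta_star t) (th x theta_star t) + dotn n (vt x theta_star t) (vt x theta_star t) <=
     9 * (dotn n (th x theta_star t0) (th x theta_star t0) + dotn n (vt x theta_star t0) (vt x theta_star t0))).
  { intros t0 x H0 Hs t Ht.
    pose proof (U_mono n beta gamma mu phi theta_star t0 x t0 t Hpc Hs H0 Hg Hm Hb ltac:(lra) Ht).
    pose proof (S_le_U n x theta_star t). pose proof (U_le_S n x theta_star t0). lra. }
  split; [|split].
  - intros eps He. exists (eps / 3). split; [lra|].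
    intros t0 x H0 Hs Hd0 t Ht. rewrite dist_S in *.
    apply sq_lt_sqrt; [apply S_nonneg|auto|].
    apply sqrt_lt_sq in Hd0; [|apply S_nonneg|lra].
    pose proof (Hbound t0 x H0 Hs t Ht). nra.
  - intros r Hr. exists (3 * r). split; [lra|].
    intros t0 x H0 Hs Hd0 t Ht. rewrite dist_S in *.
    apply sq_lt_sqrt; [apply S_nonneg|lra|].
    apply sqrt_lt_sq in Hd0; [|apply S_nonneg|lra].
    pose proof (Hbound t0 x H0 Hs t Ht). nra.
  - intros r eps Hr He.
    set (q := qq mu M T delta gamma).
    pose proof (Cq_pos mu M T delta gamma Hg Hm HT Hd) as HC.
    assert (Hq0 : 0 <= q) by (unfold q, qq; apply Rmult_le_pos; [lra|apply Rlt_le, Rinv_0_lt_compat; lra]).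
    assert (Hq1 : q < 1).
    { unfold q, qq. apply Rmult_lt_reg_r with (1 + Cq mu M T delta gamma); [lra|].
      unfold Rdiv. rewrite Rmult_assoc, Rinv_l; lra. }
    destruct (pow_lt_1_zero q ltac:(rewrite Rabs_right; lra) (eps ^ 2 / (9 * r ^ 2))) as [N HN].
    { apply Rdiv_lt_0_compat; [apply pow_lt; lra|]. pose proof (pow_lt r 2 Hr). lra. }
    exists (INR N * T). split; [apply Rmult_le_pos; [apply pos_INR|lra]|].
    intros t0 x H0 Hs Hd0 t Ht. rewrite dist_S in *.
    apply sq_lt_sqrt; [apply S_nonneg|auto|].
    apply sqrt_lt_sq in Hd0; [|apply S_nonneg|lra].
    assert (HSH : SH n theta_star phi M T delta beta gamma mu t0 x) by (unfold SH; tauto).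
    assert (HI := iterate n theta_star phi M T delta beta gamma mu t0 x HSH N). fold q in HI.
    assert (HU := U_mono n beta gamma mu phi theta_star t0 x (t0 + INR N * T) t Hpc Hs H0 Hg Hm Hb
       ltac:(pose proof (pos_INR N); nra) Ht).
    pose proof (S_le_U n x theta_star t). pose proof (U_le_S n x theta_star t0).
    specialize (HN N (Nat.le_refl N)). rewrite Rabs_right in HN by (apply Rle_ge, pow_le; auto).
    assert (Hqn : 0 <= q ^ N) by (apply pow_le; auto).
    set (S0 := dotn n (th x theta_star t0) (th x theta_star t0) + dotn n (vt x theta_star t0) (vt x theta_star t0)) in *.
    assert (HS0 : 0 <= S0) by apply S_nonneg.
    assert (H9 : q ^ N * (9 * r ^ 2) < eps ^ 2).
    { apply Rmult_lt_reg_r with (/ (9 * r ^ 2)). apply Rinv_0_lt_compat. pose proof (pow_lt r 2 Hr). lra.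
      rewrite Rmult_assoc, Rinv_r. lra. pose proof (pow_lt r 2 Hr). lra. }
    assert (q ^ N * UU n x theta_star t0 <= q ^ N * (3 * S0)) by (apply Rmult_le_compat_l; auto).
    assert (q ^ N * (3 * S0) <= q ^ N * (3 * r ^ 2)) by (apply Rmult_le_compat_l; auto; lra).
    lra.
Qed.
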